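(* Let $\mathcal{S}_1,\mathcal{S}_2\in\mathfrak{P}(X)$ with $\mathcal{S}_1\prec\mathcal{S}_2$. Then $$1\le|\mathcal{P}(\mathcal{S}_2)|-|\mathcal{H}(\mathcal{S}_2)|<|\mathcal{P}(\mathcal{S}_1)|-|\mathcal{H}(\mathcal{S}_1)|\le|X|.$$ Moreover, if $(|\mathcal{P}(\mathcal{S}_1)|-|\mathcal{H}(\mathcal{S}_1)|)-(|\mathcal{P}(\mathcal{S}_2)|-|\mathcal{H}(\mathcal{S}_2)|)\ge 2$, then there exists $\mathcal{S}_3\in\mathfrak{P}(X)$ with $\mathcal{S}_1\prec\mathcal{S}_3\prec\mathcal{S}_2$.
   Context: Let $X$ be a finite non-empty set. A set pair system on $X$ is a set of ordered pairs $(S,H)$ of subsets of $X$ with $S\ne\emptyset$ and $S\cap H=\emptyset$. On set pairs, $(S_1,H_1)\le(S_2,H_2)$ iff they are equal or one of: $S_1\cup H_1\subseteq S_2$; $S_1\cup H_1\subseteq H_2$; $S_1\subsetneq S_2$ and $H_1=H_2\ne\emptyset$. For set pair systems, $\mathcal{S}_1\preceq\mathcal{S}_2$ iff (SP1) for every $(S_1,H_1)\in\mathcal{S}_1$ there is $(S_2,H_2)\in\mathcal{S}_2$ with $(S_1,H_1)\le(S_2,H_2)$, and (SP2) for every $(S_2,H_2)\in\mathcal{S}_2$ with $H_2\ne\emptyset$, if some $(S_1,H_1)\in\mathcal{S}_1$ has $H_1=H_2$ then some such $(S_1,H_1)$ satisfies $(S_1,H_1)\le(S_2,H_2)$; $\mathcal{S}_1\prec\mathcal{S}_2$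 means $\mathcal{S}_1\preceq\mathcal{S}_2$ and $\mathcal{S}_1\ne\mathcal{S}_2$. A polestar system is a set pair system $\mathcal{S}$ with (PL1) $\mathcal{P}(\mathcal{S})=\{S:(S,H)\in\mathcal{S}\}$ is a partition of $X$; (PL2) distinct $(S,H),(S',H')\in\mathcal{S}$ have $S\ne S'$; (PL3) for each $(S,H)\in\mathcal{S}$ with $H\ne\emptyset$, $(H,\emptyset)\in\mathcal{S}$ and there is exactly one $(S',H')\in\mathcal{S}$ with $(S',H')\ne(S,H)$ and $H'=H$. Also $\mathcal{H}(\mathcal{S})=\{H:(S,H)\in\mathcal{S},H\ne\emptyset\}$, and $\mathfrak{P}(X)$ is the set of polestar systems on $X$. *)

(* Defs.v *)
From mathcomp Require Import all_boot all_order all_algebra.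
Set Implicit Arguments. Unset Strict Implicit. Unset Printing Implicit Defensive.

(* X is modelled as a finite type T (nonemptiness is a hypothesis of the theorem). *)
Section Polestar.
Variable T : finType.

Definition setpair := ({set T} * {set T})%type.

Definition set_pair_system (SS : {set setpair}) : bool :=
  [forall p in SS, (p.1 != set0) && [disjoint p.1 & p.2]].

Definition sp_le (p q : setpair) : bool :=
  [|| p == q,
      (p.1 :|: p.2) \subset q.1,
      (p.1 :|: p.2) \subset q.2
    | [&& p.1 \proper q.1, p.2 == q.2 & q.2 != set0]].

Definition sps_le (S1 S2 : {set setpair}) : Prop :=
  (forall p, p \in S1 -> exists2 q, q \in S2 & sp_le p q) /\
  (forall q, q \in S2 -> q.2 != set0 ->
     (exists2 p, p \in S1 & p.2 = q.2) ->
     exists2 p, p \in S1 & (p.2 = q.2 /\ sp_le p q)).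

Definition sps_lt (S1 S2 : {set setpair}) : Prop := sps_le S1 S2 /\ S1 <> S2.

Definition Pof (SS : {set setpair}) : {set {set T}} := [set p.1 | p in SS].
Definition Hof (SS : {set setpair}) : {set {set T}} :=
  [set p.2 | p in SS & p.2 != set0].

Definition polestar (SS : {set setpair}) : Prop :=
  [/\ set_pair_system SS,
      partition (Pof SS) [set: T],
      (forall p q, p \in SS -> q \in SS -> p != q -> p.1 != q.1) &
      (forall p, p \in SS -> p.2 != set0 ->
         (p.2, set0) \in SS /\
         exists q, [/\ q \in SS, q != p, q.2 = p.2 &
                    forall r, r \in SS -> r != p -> r.2 = p.2 -> r = q])].

Definition pmh (SS : {set setpair}) : int := (#|Pof SS|%:Z - #|Hof SS|%:Z)%R.

End Polestar.

(* Main.v *)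
Require Import Defs.
From mathcomp Require Import all_boot all_order all_algebra zify.
Import Order.TTheory GRing.Theory Num.Theory.

Set Implicit Arguments. Unset Strict Implicit. Unset Printing Implicit Defensive.

Section Basics.
Variable T : finType.
Implicit Types SS : {set setpair T}.

Record PS SS : Prop := {
 ps_ne : forall p, p \in SS -> p.1 != set0;
 ps_dj : forall p x, p \in SS -> x \in p.1 -> x \in p.2 -> False;
 ps_cov : forall x, exists2 p, p \in SS & x \in p.1;
 ps_uniq : forall p q x, p \in SS -> q \in SS -> x \in p.1 -> x \in q.1 -> p = q;
 ps_hub : forall p, p \in SS -> p.2 != set0 -> (p.2, set0) \in SS;
 ps_two : forall p, p \in SS -> p.2 != set0 -> exists2 q, q \in SS &
    [/\ q != p, q.2 = p.2 & forall r, r \in SS -> r.2 = p.2 -> r = p \/ r = q] }.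

Lemma disjP' (A B : {set T}) : reflect (forall x, x \in A -> x \in B -> False) [disjoint A & B].
Proof.
apply: (iffP pred0P) => [H x xA xB | H x /=]; first by move: (H x); rewrite /= xA xB.
by apply/negbTE/andP => -[] /H.
Qed.

Lemma polestarP SS : polestar SS <-> PS SS.
Proof.
split.
- case=> /forallP sps /and3P[/eqP cov /trivIsetP triv s0] pl2 pl3.
  have uq: forall p q x, p \in SS -> q \in SS -> x \in p.1 -> x \in q.1 -> p = q.
    move=> p q x pS qS xp xq; apply/eqP/negPn/negP => npq.
    have := pl2 p q pS qS npq => n12.
    have := triv p.1 q.1 (imset_f _ pS) (imset_f _ qS) n12.
    by move/disjP'/(_ x xp xq).
  split=> //.
  + by move=> p pS; have /implyP/(_ pS)/andP[] := sps p.
  + by move=> p x pS; have /implyP/(_ pS)/andP[_ /disjP'] := sps p; apply.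
  + move=> x; have : x \in cover (Pof SS) by rewrite cov inE.
    by case/bigcupP=> B /imsetP[p pS ->] xB; exists p.
  + by move=> p pS /(pl3 p pS) [].
  + move=> p pS /(pl3 p pS) [_ [q [qS qp q2 qu]]]; exists q => //; split=> //.
    by move=> r rS r2; case: (eqVneq r p) => [->|rp]; [left|right; apply: qu].
- case=> ne dj cov uq hub two; split.
  + apply/forallP => p; apply/implyP => pS; rewrite ne //=.
    by apply/disjP' => x; apply: dj.
  + apply/and3P; split.
    * apply/eqP/setP => x; rewrite inE; have [p pS xp] := cov x.
      by apply/bigcupP; exists p.1 => //; apply: imset_f.
    * apply/trivIsetP => A B /imsetP[p pS ->] /imsetP[q qS ->] n12.
      apply/disjP' => x xp xq; move/negP: n12; apply.
      by rewrite (uq p q x).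
    * apply/negP => /imsetP[p pS e]; move: (ne p pS); by rewrite -e eqxx.
  + move=> p q pS qS pq; apply/negP => /eqP e; move/negP: pq; apply; apply/eqP.
    have /set0Pn[x xp] := ne p pS; apply: (uq p q x) => //; by rewrite -e.
  + move=> p pS p2; split; first exact: hub.
    have [q qS [qp q2 qu]] := two p pS p2; exists q; split=> // r rS rp r2.
    by case: (qu r rS r2) => // e; move/negP: rp; rewrite e eqxx.
Qed.

Section PSfacts.
Variable SS : {set setpair T}.
Hypothesis hS : PS SS.

Lemma ps_sub p q : p \in SS -> q \in SS -> p.1 \subset q.1 -> p = q.
Proof.
move=> pS qS /subsetP sub; have /set0Pn[x xp] := ps_ne hS pS.
exact: (ps_uniq hS pS qS xp (sub x xp)).
Qed.

Lemma ps_eq1 p q : p \in SS -> q \in SS -> p.1 = q.1 -> p = q.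
Proof. by move=> pS qS e; apply: ps_sub => //; rewrite e. Qed.

Lemma ps_hubpair p q : p \in SS -> p.2 != set0 -> q \in SS -> q.1 = p.2 -> q = (p.2, set0).
Proof. by move=> pS p2 qS e; apply: ps_eq1 => //; exact: ps_hub. Qed.

Lemma ps_notsat p q : p \in SS -> p.2 != set0 -> q \in SS -> q.1 = p.2 -> q.2 = set0.
Proof. by move=> pS p2 qS e; rewrite (ps_hubpair pS p2 qS e). Qed.

Lemma ps_ne' p : p \in SS -> exists x, x \in p.1.
Proof. by move=> pS; have /set0Pn := ps_ne hS pS. Qed.

Lemma ps_card_Pof : #|Pof SS| = #|SS|.
Proof.
rewrite /Pof card_in_imset // => p q pS qS e; exact: ps_eq1.
Qed.

End PSfacts.

Lemma le_sub (a c h : {set T}) : a \subset c -> sp_le (a, h) (c, h).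
Proof.
move=> ac; rewrite /sp_le /=.
case: (eqVneq h set0) => [->|h0]; first by rewrite setU0 ac orbT.
case: (eqVneq a c) => [->|ne]; first by rewrite eqxx.
have pr : a \proper c.
  by rewrite properEneq ne.
by rewrite pr eqxx /= !orbT.
Qed.

Lemma le_same2 (p q : setpair T) : p.1 != set0 -> [disjoint p.1 & p.2] ->
  [disjoint q.1 & q.2] -> p.2 = q.2 -> q.2 != set0 -> sp_le p q -> p.1 \subset q.1.
Proof.
move=> p1 dp dq e q2; rewrite /sp_le => /or4P[/eqP->//| | |].
- rewrite subUset => /andP[_ s]; case/set0Pn: q2 => x xq.
  by move/disjP': dq => /(_ x (subsetP s x _)); rewrite e => /(_ xq) /(_ xq).
- rewrite subUset => /andP[s _]; case/set0Pn: p1 => x xp.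
  by move/disjP': dp => /(_ x xp); rewrite e; move=> /(_ (subsetP s x xp)).
- by by case/and3P => /proper_sub.
Qed.

Lemma sub_ne (A B : {set T}) : A != set0 -> A \subset B -> B != set0.
Proof.
by move=> /set0Pn[x xA] /subsetP s; apply/set0Pn; exists x; apply: s.
Qed.

Section LeFacts.
Variables S1 S2 : {set setpair T}.
Hypotheses (h1 : PS S1) (h2 : PS S2) (le12 : sps_le S1 S2).

Lemma R_ref p : p \in S1 -> exists2 r, r \in S2 & p.1 \subset r.1.
Proof.
move=> pS; have [q qS] := le12.1 p pS; rewrite /sp_le => /or4P[/eqP e| | |]; first subst p.
- by exists q.
- by move=> s; exists q => //; apply: subset_trans s; apply: subsetUl.
- move=> s; have s1 : p.1 \subset q.2 by apply: subset_trans s; apply: subsetUl.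
  exists (q.2, set0) => //; apply: (ps_hub h2 qS); exact: sub_ne (ps_ne h1 pS) s1.
- by case/and3P => /proper_sub s _ _; exists q.
Qed.

Lemma R_sat p : p \in S1 -> p.2 != set0 ->
  (exists2 r, r \in S2 & p.1 :|: p.2 \subset r.1) \/
  ((p.2, set0) \in S2 /\ exists2 r, r \in S2 & r.2 = p.2 /\ p.1 \subset r.1).
Proof.
move=> pS p2; have [q qS] := le12.1 p pS; rewrite /sp_le => /or4P[/eqP e| | |]; first subst p.
- right; split; last by exists q.
  exact: (ps_hub h2 qS p2).
- by move=> s; left; exists q.
- move=> s; left; exists (q.2, set0) => //; apply: (ps_hub h2 qS).
  apply: sub_ne s; apply: sub_ne (ps_ne h1 pS) (subsetUl _ _).
- case/and3P => /proper_sub s /eqP e q2; right; split; last by exists q.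
  by rewrite e; exact: (ps_hub h2 qS q2).
Qed.
End LeFacts.

Lemma ps_disj SS p : PS SS -> p \in SS -> [disjoint p.1 & p.2].
Proof. by move=> h pS; apply/disjP' => x; apply: (ps_dj h pS). Qed.

Lemma R_sp2 S1 S2 : PS S1 -> PS S2 -> sps_le S1 S2 -> forall r, r \in S2 -> r.2 != set0 ->
  (exists2 p, p \in S1 & p.2 = r.2) -> exists2 p, p \in S1 & p.2 = r.2 /\ p.1 \subset r.1.
Proof.
move=> h1 h2 le12 r rS r2 ex; have [p pS [e le]] := le12.2 r rS r2 ex.
exists p => //; split=> //; apply: le_same2 le => //.
- exact: (ps_ne h1 pS).
- exact: (ps_disj h1 pS).
- exact: (ps_disj h2 rS).
Qed.

Lemma two_transport (S1 S3 : {set setpair T}) (psi phi : setpair T -> setpair T) :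
  PS S1 ->
  (forall r, r \in S3 -> psi r \in S1 /\ (psi r).2 = r.2) ->
  (forall r r', r \in S3 -> r' \in S3 -> psi r = psi r' -> r = r') ->
  (forall q p, q \in S1 -> p \in S3 -> p.2 != set0 -> q.2 = p.2 -> phi q \in S3 /\ psi (phi q) = q) ->
  forall p, p \in S3 -> p.2 != set0 -> exists2 q, q \in S3 &
    [/\ q != p, q.2 = p.2 & forall r, r \in S3 -> r.2 = p.2 -> r = p \/ r = q].
Proof.
move=> h1 hpsi inj hphi p pS p2.
have [ps1 ps2] := hpsi p pS.
have p2' : (psi p).2 != set0 by rewrite ps2.
have [q qS1 [qp q2 qu]] := ps_two h1 ps1 p2'.
have [phS phK] := hphi q p qS1 pS p2 (etrans q2 ps2).
exists (phi q) => //; split.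
- by apply/eqP => e; move/eqP: qp; apply; rewrite -phK e.
- by have [_ <-] := hpsi _ phS; rewrite phK q2 ps2.
- move=> r rS r2; have [rs1 rs2] := hpsi r rS.
  case: (qu (psi r) rs1 (etrans rs2 (etrans r2 (esym ps2)))) => e.
  + by left; apply: inj.
  + by right; apply: inj => //; rewrite phK.
Qed.

Lemma HofP (S : {set setpair T}) g :
  reflect (exists2 p, p \in S & p.2 != set0 /\ g = p.2) (g \in Hof S).
Proof.
apply: (iffP imsetP) => [[p] | [p pS [p2 ->]]].
- by rewrite inE => /andP[pS p2] ->; exists p.
- by exists p => //; rewrite inE pS.
Qed.

Lemma le_refl (p : setpair T) : sp_le p p.
Proof. by rewrite /sp_le eqxx. Qed.

Section Merge.
Variables (S1 : {set setpair T}) (X Y h : {set T}).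
Hypotheses (h1 : PS S1) (hX : (X,h) \in S1) (hY : (Y,set0) \in S1) (XY : X != Y)
  (nX : forall p, p \in S1 -> p.2 != X) (nY : forall p, p \in S1 -> p.2 != Y).

Definition mS3 := (X :|: Y, h) |: (S1 :\ (X,h) :\ (Y,set0)).

Lemma mem3 r : (r \in mS3) = (r == (X :|: Y, h)) || [&& r != (Y,set0), r != (X,h) & r \in S1].
Proof. by rewrite !inE. Qed.

Lemma XYdisj x : x \in X -> x \in Y -> False.
Proof.
move=> xX xY; have := ps_uniq h1 hX hY xX xY; case=> e _; by move: XY; rewrite e eqxx.
Qed.

Lemma Xne : X != set0.
Proof. exact: (ps_ne h1 hX). Qed.
Lemma Yne : Y != set0.
Proof. exact: (ps_ne h1 hY). Qed.

Lemma nw_notin : (X :|: Y, h) \notin S1.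
Proof.
apply/negP => nS; have /set0Pn[x xX] := Xne.
have xU : x \in (X :|: Y, h).1 by rewrite /= inE xX.
  have [e] := ps_uniq h1 nS hX xU xX.
have /set0Pn[y yY] := Yne.
by apply: (XYdisj (x:=y)) => //; rewrite -e inE yY orbT.
Qed.

Lemma hY' : h != Y.
Proof. exact: (nY hX). Qed.
Lemma hX' : h != X.
Proof. exact: (nX hX). Qed.

Lemma ps3 : PS mS3.
Proof.
split.
- move=> p; rewrite mem3 => /orP[/eqP->|/and3P[_ _ pS]]; last exact: (ps_ne h1 pS).
  exact: sub_ne Xne (subsetUl _ _).
- move=> p x; rewrite mem3 => /orP[/eqP->|/and3P[_ _ pS]]; last exact: (ps_dj h1 pS).
  rewrite /= inE => /orP[xX xh|xY xh]; first exact: (ps_dj h1 hX xX xh).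
  have h0 : h != set0 by apply/set0Pn; exists x.
  have := ps_uniq h1 hY (ps_hub h1 hX h0) xY xh; case=> e.
  by move: hY'; rewrite e eqxx.
- move=> x; have [p pS xp] := ps_cov h1 x.
  case: (eqVneq p (X,h)) => [e|pX].
    by move: xp; rewrite e /= => xp; exists (X :|: Y, h); rewrite ?mem3 ?eqxx //= inE xp.
  case: (eqVneq p (Y,set0)) => [e|pY].
    by move: xp; rewrite e /= => xp; exists (X :|: Y, h); rewrite ?mem3 ?eqxx //= inE xp orbT.
  by exists p => //; rewrite mem3 pX pY pS orbT.
- have key : forall r x, [&& r != (Y,set0), r != (X,h) & r \in S1] -> x \in r.1 ->
     x \in (X :|: Y, h).1 -> False.
    move=> r x /and3P[rY rX rS] xr; rewrite /= inE => /orP[xX|xY].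
    + by have := ps_uniq h1 rS hX xr xX; move/eqP: rX.
    + by have := ps_uniq h1 rS hY xr xY; move/eqP: rY.
  move=> p q x; rewrite !mem3 => /orP[/eqP->|pS] /orP[/eqP->|qS] xp xq //.
  + by case: (key q x qS xq xp).
  + by case: (key p x pS xp xq).
  + case/and3P: pS => _ _ pS; case/and3P: qS => _ _ qS; exact: (ps_uniq h1 pS qS xp xq).
- have gen : forall g, g != set0 -> (g, set0) \in S1 -> g != X -> g != Y -> (g, set0) \in mS3.
    move=> g g0 gS gX gY; rewrite mem3; apply/orP; right; rewrite gS andbT.
    by rewrite !xpair_eqE (negbTE gX) (negbTE gY).
  move=> p; rewrite mem3 => /orP[/eqP->|/and3P[_ _ pS]] /= p2.
  + by apply: (gen h) => //; [exact: (ps_hub h1 hX p2) | exact: hX' | exact: hY'].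
  + apply: gen => //; [exact: (ps_hub h1 pS p2) | exact: (nX pS) | exact: (nY pS)].
- apply: (two_transport (psi := fun r => if r == (X :|: Y, h) then (X,h) else r)
                        (phi := fun q => if q == (X,h) then (X :|: Y, h) else q) h1).
  + move=> r; rewrite mem3 => /orP[/eqP->|/and3P[_ rX rS]]; first by rewrite eqxx.
    have -> : (r == (X :|: Y, h)) = false.
      by apply/negP => /eqP e; move: nw_notin; rewrite -e rS.
    by [].
  + have nn : forall r, [&& r != (Y,set0), r != (X,h) & r \in S1] -> (r == (X :|: Y, h)) = false.
      move=> r /and3P[_ _ rS]; apply/negP => /eqP e; by move: nw_notin; rewrite -e rS.
    move=> r r'; rewrite !mem3 => /orP[/eqP->|rS] /orP[/eqP->|rS'] //; rewrite ?eqxx ?nn //.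
    * by move=> e; move: rS'; rewrite -e eqxx /= andbF.
    * by move=> e; move: rS; rewrite e eqxx /= andbF.
  + move=> q p qS pS p2 e; case: (eqVneq q (X,h)) => [->|qX].
      by rewrite eqxx mem3 !eqxx.
    have qY : q != (Y, set0) by apply/eqP => qY; move: p2; rewrite -e qY eqxx.
    have -> : (q == (X :|: Y, h)) = false.
      by apply/negP => /eqP e'; move: nw_notin; rewrite -e' qS.
    by rewrite mem3 qY qX qS orbT.
Qed.

Lemma le13 : sps_le S1 mS3.
Proof.
split.
- move=> p pS; case: (eqVneq p (X,h)) => [->|pX].
    by exists (X :|: Y, h); rewrite ?mem3 ?eqxx //; apply: le_sub; apply: subsetUl.
  case: (eqVneq p (Y,set0)) => [->|pY].
    exists (X :|: Y, h); rewrite ?mem3 ?eqxx //.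
    by rewrite /sp_le /= setU0 subsetUr orbT.
  by exists p; [rewrite mem3 pX pY pS orbT | exact: le_refl].
- move=> q; rewrite mem3 => /orP[/eqP->|/and3P[_ _ qS]] q2 _.
  + by exists (X,h) => //; split=> //; apply: le_sub; apply: subsetUl.
  + by exists q => //; split=> //; exact: le_refl.
Qed.

Lemma Hof3 : Hof mS3 = Hof S1.
Proof.
apply/setP => g; apply/HofP/HofP => [[p]|[p pS [p2 ->]]].
- rewrite mem3 => /orP[/eqP->|/and3P[_ _ pS]] [p2 ->]; first by exists (X,h).
  by exists p.
- case: (eqVneq p (X,h)) => [e|pX].
    by exists (X :|: Y, h); rewrite ?mem3 ?eqxx // e; move: p2; rewrite e.
  have pY : p != (Y, set0) by apply/eqP => e; move: p2; rewrite e eqxx.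
  by exists p; rewrite ?mem3 ?pX ?pY ?pS ?orbT.
Qed.

Lemma card3 : #|mS3|.+1 = #|S1|.
Proof.
rewrite cardsU1 (cardsD1 (X,h) S1) hX (cardsD1 (Y,set0) (S1 :\ (X,h))).
have -> : (Y, set0) \in S1 :\ (X, h).
  by rewrite !inE hY andbT; apply/negP => /eqP[e]; move: XY; rewrite e eqxx.
have -> : (X :|: Y, h) \notin S1 :\ (X, h) :\ (Y, set0).
  by rewrite !inE (negbTE nw_notin) !andbF.
by [].
Qed.

Lemma pmh3 : pmh mS3 = (pmh S1 - 1)%R.
Proof.
rewrite /pmh (ps_card_Pof ps3) (ps_card_Pof h1) Hof3 -card3.
by rewrite -addn1 PoszD [RHS]addrAC addrK.
Qed.

Lemma le32 (S2 : {set setpair T}) (r0 : setpair T) : PS S2 -> sps_le S1 S2 ->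
  r0 \in S2 -> X :|: Y \subset r0.1 -> (h != set0 -> r0.2 = h) -> sps_le mS3 S2.
Proof.
move=> h2 le12 r0S sub r0h.
have nwle : sp_le (X :|: Y, h) r0.
  case: (eqVneq h set0) => [h0|h0].
    by rewrite /sp_le /= h0 setU0 sub orbT.
  by case: r0 r0S sub r0h => a b /= _ sub /(_ h0) ->; apply: le_sub.
split.
- move=> q; rewrite mem3 => /orP[/eqP->|/and3P[_ _ qS]]; first by exists r0.
  exact: le12.1 q qS.
- move=> r rS r2 [q qS3 qr].
  have [p pS [pr ple]] : exists2 p, p \in S1 & p.2 = r.2 /\ sp_le p r.
    apply: le12.2 => //; move: qS3; rewrite mem3 => /orP[/eqP e|/and3P[_ _ qS]].
    + by exists (X,h) => //; rewrite -qr e.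
    + by exists q.
  case: (eqVneq p (X,h)) => [e|pX].
    have Xr' := le_same2 (ps_ne h1 pS) (ps_disj h1 pS) (ps_disj h2 rS) pr r2 ple.
    have Xr : X \subset r.1 by move: Xr'; rewrite e.
    have /set0Pn[x xX] := Xne.
    have rr0 : r = r0.
      apply: (ps_uniq h2 rS r0S (subsetP Xr x xX)).
      by apply: (subsetP sub); rewrite inE xX.
    exists (X :|: Y, h); first by rewrite mem3 eqxx.
    by split; [rewrite /= -pr e | rewrite rr0].
  case: (eqVneq p (Y,set0)) => [e|pY].
    by move: r2; rewrite -pr e eqxx.
  by exists p => //; rewrite mem3 pX pY pS orbT.
Qed.
End Merge.

Section Collapse.
Variables (S1 : {set setpair T}) (A B H : {set T}).
Hypotheses (h1 : PS S1) (hH : (H,set0) \in S1) (hA : (A,H) \in S1) (hB : (B,H) \in S1)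
  (AB : A != B) (H0 : H != set0).

Definition cS3 := (A :|: B :|: H, set0) |: (S1 :\ (A,H) :\ (B,H) :\ (H,set0)).
Local Notation nw := (A :|: B :|: H, @set0 T).
Local Notation old r := [&& r != (H,set0), r != (B,H), r != (A,H) & r \in S1].

Lemma cmem (r : setpair T) : (r \in cS3) = (r == nw) || old r.
Proof. by rewrite !inE. Qed.

Lemma onlyAB (r : setpair T) : r \in S1 -> r.2 = H -> r = (A,H) \/ r = (B,H).
Proof.
move=> rS r2; have [q qS [qA q2 qu]] := ps_two h1 hA H0.
have eB : (B,H) = q.
  case: (qu (B,H) hB erefl) => // [[e]]; by move: AB; rewrite e eqxx.
case: (qu r rS r2) => ->; [by left | by right].
Qed.

Lemma old_out (r : setpair T) x : old r -> x \in r.1 -> x \in nw.1 -> False.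
Proof.
move=> /and4P[rH rB rA rS] xr; rewrite /= !inE => /orP[/orP[xA|xB]|xH].
- by have := ps_uniq h1 rS hA xr xA; move/eqP: rA.
- by have := ps_uniq h1 rS hB xr xB; move/eqP: rB.
- by have := ps_uniq h1 rS hH xr xH; move/eqP: rH.
Qed.

Lemma cnw_notin : nw \notin S1.
Proof.
apply/negP => nS; have /set0Pn[x xH] := H0.
have xn : x \in nw.1 by rewrite /= !inE xH orbT.
have [e] := ps_uniq h1 nS hH xn xH.
have /set0Pn[y yA] := ps_ne h1 hA.
have : y \in H by rewrite -e !inE yA.
by apply: (ps_dj h1 hA yA).
Qed.

Lemma old_S1 (r : setpair T) : old r -> r \in S1.
Proof. by case/and4P. Qed.

Lemma old_notnw (r : setpair T) : old r -> (r == nw) = false.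
Proof. move=> /old_S1 rS; apply/negP => /eqP e; by move: cnw_notin; rewrite -e rS. Qed.

Lemma old_ne2 (r : setpair T) : r \in S1 -> r.2 != set0 -> r.2 != H -> old r.
Proof.
move=> rS r2 rH; rewrite rS andbT.
apply/and3P; split; apply/eqP => e; move: r2 rH; rewrite e ?eqxx //.
Qed.

Lemma cps3 : PS cS3.
Proof.
split.
- move=> p; rewrite cmem => /orP[/eqP->|/old_S1 pS]; last exact: (ps_ne h1 pS).
  exact: sub_ne H0 (subsetUr _ _).
- move=> p x; rewrite cmem => /orP[/eqP->|/old_S1 pS]; last exact: (ps_dj h1 pS).
  by move=> _ /=; rewrite inE.
- move=> x; have [p pS xp] := ps_cov h1 x.
  case: (boolP (old p)) => [op|]; first by exists p; rewrite // cmem op orbT.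
  rewrite pS andbT => nop.
  exists nw; first by rewrite cmem eqxx.
  case: (eqVneq p (H,set0)) => [e|pH]; first by move: xp; rewrite e /= !inE => ->; rewrite ?orbT.
  case: (eqVneq p (B,H)) => [e|pB]; first by move: xp; rewrite e /= !inE => ->; rewrite ?orbT.
  case: (eqVneq p (A,H)) => [e|pA]; first by move: xp; rewrite e /= !inE => ->; rewrite ?orbT.
  by move: nop; rewrite pH pB pA.
- move=> p q x; rewrite !cmem => /orP[/eqP->|pS] /orP[/eqP->|qS] xp xq //.
  + by case: (old_out qS xq xp).
  + by case: (old_out pS xp xq).
  + exact: (ps_uniq h1 (old_S1 pS) (old_S1 qS) xp xq).
- move=> p; rewrite cmem => /orP[/eqP->|op] p2; first by move: p2; rewrite eqxx.
  have pS := old_S1 op.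
  have pH : p.2 != H.
    apply/eqP => e; case: (onlyAB pS e) => e'; move: op; rewrite e' eqxx ?andbF //.
  rewrite cmem; apply/orP; right.
  rewrite (ps_hub h1 pS p2) andbT !xpair_eqE (negbTE pH) /=. rewrite !(eq_sym set0 H) (negbTE H0) !andbF /=. done.
- apply: (two_transport (psi := fun r => if r == nw then (H,set0) else r)
                        (phi := id) h1).
  + move=> r; rewrite cmem => /orP[/eqP->|op]; first by rewrite eqxx.
    by rewrite old_notnw // old_S1.
  + move=> r r'; rewrite !cmem => /orP[/eqP->|rS] /orP[/eqP->|rS'] //; rewrite ?eqxx ?old_notnw //.
    * by move=> e; move: rS'; rewrite -e eqxx.
    * by move=> e; move: rS; rewrite e eqxx.
  + move=> q p qS; rewrite cmem => /orP[/eqP->|op] p2 e; first by move: p2; rewrite eqxx.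
    have pH : p.2 != H.
      apply/eqP => e'; case: (onlyAB (old_S1 op) e') => e''; move: op; rewrite e'' eqxx ?andbF //.
    have oq : old q by apply: old_ne2; rewrite ?e.
    by rewrite cmem oq orbT old_notnw.
Qed.

Lemma old_H (r : setpair T) : old r -> r.2 != H.
Proof.
move=> op; apply/eqP => e; case: (onlyAB (old_S1 op) e) => e'; move: op; rewrite e' eqxx ?andbF //.
Qed.

Lemma cle13 : sps_le S1 cS3.
Proof.
split.
- move=> p pS; case: (boolP (old p)) => [op|nop].
    by exists p; [rewrite cmem op orbT | exact: le_refl].
  exists nw; first by rewrite cmem eqxx.
  rewrite /sp_le /=; apply/orP; right; apply/orP; left.
  move: nop; rewrite pS andbT => nop.
  case: (eqVneq p (H,set0)) => [->|pH]; first by rewrite setU0 subsetUr.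
  case: (eqVneq p (B,H)) => [->|pB].
    by apply/subsetP => y; rewrite !inE => /orP[]->; rewrite ?orbT.
  case: (eqVneq p (A,H)) => [->|pA].
    by apply/subsetP => y; rewrite !inE => /orP[]->; rewrite ?orbT.
  by move: nop; rewrite pH pB pA.
- move=> q; rewrite cmem => /orP[/eqP->|oq] q2 _; first by move: q2; rewrite eqxx.
  by exists q; [exact: old_S1 | split=> //; exact: le_refl].
Qed.

Lemma cHof3 : Hof cS3 = Hof S1 :\ H.
Proof.
apply/setP => g; rewrite inE; apply/HofP/andP => [[p]|[gH /HofP[p pS [p2 e]]]].
- rewrite cmem => /orP[/eqP->|op] [p2 ->]; first by move: p2; rewrite eqxx.
  split; [by rewrite inE; exact: (old_H op) | apply/HofP; exists p => //; exact: (old_S1 op)].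
- exists p; last by split.
  rewrite inE in gH; rewrite cmem old_ne2 ?orbT //; by rewrite -e.
Qed.

Lemma ccard3 : #|cS3|.+2 = #|S1|.
Proof.
rewrite cardsU1 (cardsD1 (A,H) S1) hA (cardsD1 (B,H) (S1 :\ (A,H))).
rewrite (cardsD1 (H,set0) (S1 :\ (A,H) :\ (B,H))).
have -> : (B,H) \in S1 :\ (A, H).
  by rewrite !inE hB andbT; apply/negP => /eqP[e]; move: AB; rewrite e eqxx.
have -> : (H,set0) \in S1 :\ (A, H) :\ (B,H).
  by rewrite !inE hH !xpair_eqE !(eq_sym set0 H) (negbTE H0) !andbF.
have -> : nw \notin S1 :\ (A, H) :\ (B, H) :\ (H, set0).
  by rewrite !inE (negbTE cnw_notin) !andbF.
by rewrite !add1n.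
Qed.

Lemma cHcard : #|Hof cS3|.+1 = #|Hof S1|.
Proof.
rewrite cHof3 (cardsD1 H (Hof S1)).
have -> : H \in Hof S1 by apply/HofP; exists (A,H).
by rewrite add1n.
Qed.

Lemma cpmh3 : pmh cS3 = (pmh S1 - 1)%R.
Proof.
rewrite /pmh (ps_card_Pof cps3) (ps_card_Pof h1) -ccard3 -cHcard.
move: (#|cS3|) (#|Hof cS3|) => a b. lia.
Qed.

Lemma cle32 (S2 : {set setpair T}) (r0 : setpair T) : PS S2 -> sps_le S1 S2 ->
  r0 \in S2 -> A :|: B :|: H \subset r0.1 -> sps_le cS3 S2.
Proof.
move=> h2 le12 r0S sub.
split.
- move=> q; rewrite cmem => /orP[/eqP->|oq]; last exact: le12.1 q (old_S1 oq).
  by exists r0 => //; rewrite /sp_le /= setU0 sub orbT.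
- move=> r rS r2 [q qS3 qr].
  have oq : old q by move: qS3; rewrite cmem => /orP[/eqP e|//]; move: r2; rewrite -qr e eqxx.
  have [p pS [pr ple]] := le12.2 r rS r2 (ex_intro2 _ _ q (old_S1 oq) qr).
  have op : old p.
    apply: old_ne2 => //; rewrite pr // -qr; exact: old_H.
  by exists p => //; rewrite cmem op orbT.
Qed.
End Collapse.

Section NewHub.
Variables (S1 : {set setpair T}) (A B H : {set T}).
Hypotheses (h1 : PS S1) (hH : (H,set0) \in S1) (hA : (A,set0) \in S1) (hB : (B,set0) \in S1)
  (AB : A != B) (AH : A != H) (BH : B != H)
  (nH : forall p, p \in S1 -> p.2 != H) (nA : forall p, p \in S1 -> p.2 != A)
  (nB : forall p, p \in S1 -> p.2 != B).

Definition nS3 := (A,H) |: ((B,H) |: (S1 :\ (A,set0) :\ (B,set0))).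
Local Notation old r := [&& r != (B,set0), r != (A,set0) & r \in S1].

Lemma nmem (r : setpair T) : (r \in nS3) = [|| r == (A,H), r == (B,H) | old r].
Proof. by rewrite !inE. Qed.

Lemma nH0 : H != set0.
Proof. exact: (ps_ne h1 hH). Qed.

Lemma nold_S1 (r : setpair T) : old r -> r \in S1.
Proof. by case/and3P. Qed.

Lemma nold_2 (r : setpair T) : old r -> r.2 != H.
Proof. by move/nold_S1/nH. Qed.

Lemma nold_ne2 (r : setpair T) : r \in S1 -> r.2 != set0 -> old r.
Proof.
move=> rS r2; rewrite rS andbT; apply/andP; split; apply/eqP => e; by move: r2; rewrite e eqxx.
Qed.

Lemma nold_out (r : setpair T) x C : old r -> (C,set0) \in S1 -> x \in r.1 -> x \in C -> C = A \/ C = B -> False.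
Proof.
move=> /and3P[rB rA rS] CS xr xC [] e; subst C.
- by have := ps_uniq h1 rS CS xr xC; move/eqP: rA.
- by have := ps_uniq h1 rS CS xr xC; move/eqP: rB.
Qed.

Lemma nps3 : PS nS3.
Proof.
have H0 := nH0.
split.
- move=> p; rewrite nmem => /or3P[/eqP->|/eqP->|/nold_S1 pS]; last exact: (ps_ne h1 pS).
  + exact: (ps_ne h1 hA).
  + exact: (ps_ne h1 hB).
- move=> p x; rewrite nmem => /or3P[/eqP->|/eqP->|/nold_S1 pS]; last exact: (ps_dj h1 pS).
  + move=> /= xA xH; have [e] := ps_uniq h1 hA hH xA xH; by move: AH; rewrite e eqxx.
  + move=> /= xB xH; have [e] := ps_uniq h1 hB hH xB xH; by move: BH; rewrite e eqxx.
- move=> x; have [p pS xp] := ps_cov h1 x.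
  case: (eqVneq p (A,set0)) => [e|pA].
    by exists (A,H); rewrite ?nmem ?eqxx //; move: xp; rewrite e.
  case: (eqVneq p (B,set0)) => [e|pB].
    by exists (B,H); rewrite ?nmem ?eqxx ?orbT //; move: xp; rewrite e.
  by exists p => //; rewrite nmem pA pB pS !orbT.
- move=> p q x; rewrite !nmem => /or3P[/eqP->|/eqP->|op] /or3P[/eqP->|/eqP->|oq] /= xp xq //.
  + have [e] := ps_uniq h1 hA hB xp xq; by move: AB; rewrite e eqxx.
  + by case: (nold_out oq hA xq xp (or_introl erefl)).
  + have [e] := ps_uniq h1 hA hB xq xp; by move: AB; rewrite e eqxx.
  + by case: (nold_out oq hB xq xp (or_intror erefl)).
  + by case: (nold_out op hA xp xq (or_introl erefl)).
  + by case: (nold_out op hB xp xq (or_intror erefl)).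
  + exact: (ps_uniq h1 (nold_S1 op) (nold_S1 oq) xp xq).
- move=> p; rewrite nmem => /or3P[/eqP->|/eqP->|op] /= p2.
  + by rewrite nmem !xpair_eqE hH (eq_sym H A) (eq_sym H B) (negbTE AH) (negbTE BH).
  + by rewrite nmem !xpair_eqE hH (eq_sym H A) (eq_sym H B) (negbTE AH) (negbTE BH).
  + have pS := nold_S1 op; have g := ps_hub h1 pS p2.
    rewrite nmem; apply/orP; right; apply/orP; right.
    rewrite g andbT !xpair_eqE (negbTE (nA pS)) (negbTE (nB pS)) //.
- move=> p; rewrite nmem => /or3P[/eqP->|/eqP->|op] /= p2.
  + exists (B,H); first by rewrite nmem eqxx orbT.
    split => //; first by rewrite xpair_eqE eq_sym (negbTE AB).
    move=> r; rewrite nmem => /or3P[/eqP->|/eqP->|or] r2; [by left|by right|].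
    by move: (nold_2 or); rewrite r2 eqxx.
  + exists (A,H); first by rewrite nmem eqxx.
    split => //; first by rewrite xpair_eqE (negbTE AB).
    move=> r; rewrite nmem => /or3P[/eqP->|/eqP->|or] r2; [by right|by left|].
    by move: (nold_2 or); rewrite r2 eqxx.
  + have pS := nold_S1 op; have [q qS [qp q2 qu]] := ps_two h1 pS p2.
    have oq : old q by apply: nold_ne2; rewrite // q2.
    exists q; first by rewrite nmem oq !orbT.
    split=> // r; rewrite nmem => /or3P[/eqP->|/eqP->|or] /= r2.
    * by move: (nold_2 op); rewrite -r2 eqxx.
    * by move: (nold_2 op); rewrite -r2 eqxx.
    * exact: qu (nold_S1 or) r2.
Qed.

Lemma nnotin (C : {set T}) : (C,set0) \in S1 -> (C,H) \notin S1.
Proof.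
move=> CS; apply/negP => CH; have /set0Pn[x xC] := ps_ne h1 CS.
have [e] := ps_uniq h1 CS CH xC xC; move: nH0; by rewrite -e eqxx.
Qed.

Lemma nle13 : sps_le S1 nS3.
Proof.
split.
- move=> p pS; case: (eqVneq p (A,set0)) => [->|pA].
    by exists (A,H); rewrite ?nmem ?eqxx //= /sp_le /= setU0 subxx orbT.
  case: (eqVneq p (B,set0)) => [->|pB].
    by exists (B,H); rewrite ?nmem ?eqxx ?orbT //= /sp_le /= setU0 subxx orbT.
  by exists p; [rewrite nmem pA pB pS !orbT | exact: le_refl].
- move=> q; rewrite nmem => /or3P[/eqP->|/eqP->|oq] q2 [p pS pq].
  + by move: (nH pS); rewrite pq eqxx.
  + by move: (nH pS); rewrite pq eqxx.
  + by exists q; [exact: nold_S1 | split=> //; exact: le_refl].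
Qed.

Lemma nHof3 : Hof nS3 = H |: Hof S1.
Proof.
apply/setP => g; rewrite inE; apply/HofP/orP => [[p]|[/set1P->|/HofP[p pS [p2 ->]]]].
- rewrite nmem => /or3P[/eqP->|/eqP->|op] [p2 ->]; try by left; rewrite inE.
  by right; apply/HofP; exists p => //; exact: (nold_S1 op).
- by exists (A,H); rewrite ?nmem ?eqxx //; split=> //; exact: nH0.
- by exists p => //; rewrite nmem nold_ne2 ?orbT.
Qed.

Lemma ncard3 : #|nS3| = #|S1|.
Proof.
rewrite cardsU1 cardsU1 (cardsD1 (A,set0) S1) hA (cardsD1 (B,set0) (S1 :\ (A,set0))).
have -> : (B,set0) \in S1 :\ (A,set0).
  by rewrite !inE hB andbT; apply/negP => /eqP[e]; move: AB; rewrite e eqxx.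
have -> : (B,H) \notin S1 :\ (A,set0) :\ (B,set0).
  by rewrite !inE (negbTE (nnotin hB)) !andbF.
have -> : (A,H) \notin (B,H) |: (S1 :\ (A,set0) :\ (B,set0)).
  rewrite !inE (negbTE (nnotin hA)) !andbF orbF xpair_eqE (negbTE AB) //.
by rewrite !add1n.
Qed.

Lemma nHcard : #|Hof nS3| = #|Hof S1|.+1.
Proof.
rewrite nHof3 cardsU1.
have -> : H \notin Hof S1 by apply/negP => /HofP[p pS [_ e]]; move: (nH pS); rewrite -e eqxx.
by rewrite add1n.
Qed.

Lemma npmh3 : pmh nS3 = (pmh S1 - 1)%R.
Proof.
rewrite /pmh (ps_card_Pof nps3) (ps_card_Pof h1) ncard3 nHcard.
move: (#|S1|) (#|Hof S1|) => a b. lia.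
Qed.

Lemma nle32 (S2 : {set setpair T}) : PS S2 -> sps_le S1 S2 ->
  (A,H) \in S2 -> (B,H) \in S2 -> sps_le nS3 S2.
Proof.
move=> h2 le12 AS BS.
split.
- move=> q; rewrite nmem => /or3P[/eqP->|/eqP->|oq].
  + by exists (A,H) => //; exact: le_refl.
  + by exists (B,H) => //; exact: le_refl.
  + exact: le12.1 q (nold_S1 oq).
- move=> r rS r2 [q qS3 qr].
  case: (eqVneq r.2 H) => [rH|rH].
    exists r; last by split=> //; exact: le_refl.
    case: (onlyAB h2 AS BS AB nH0 rS rH) => ->; by rewrite nmem eqxx ?orbT.
  have oq : old q.
    by move: qS3; rewrite nmem => /or3P[/eqP e|/eqP e|//]; move: rH; rewrite -qr e eqxx.
  have [p pS [pr ple]] := le12.2 r rS r2 (ex_intro2 _ _ q (nold_S1 oq) qr).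
  by exists p => //; rewrite nmem nold_ne2 ?orbT // pr.
Qed.
End NewHub.

Definition good (S1 S2 S3 : {set setpair T}) :=
  [/\ PS S3, sps_le S1 S3, sps_le S3 S2 & pmh S3 = (pmh S1 - 1)%R].

Lemma share_eq SS p q (A : {set T}) : PS SS -> p \in SS -> q \in SS -> A != set0 ->
  A \subset p.1 -> A \subset q.1 -> p = q.
Proof.
move=> h pS qS /set0Pn[x xA] /subsetP sp /subsetP sq.
exact: (ps_uniq h pS qS (sp x xA) (sq x xA)).
Qed.

Lemma merge_apply S1 S2 a b r0 : PS S1 -> PS S2 -> sps_le S1 S2 ->
  a \in S1 -> b \in S1 -> b.2 = set0 -> a != b ->
  (forall s, s \in S1 -> s.2 != a.1) -> (forall s, s \in S1 -> s.2 != b.1) ->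
  r0 \in S2 -> a.1 \subset r0.1 -> b.1 \subset r0.1 -> (a.2 != set0 -> r0.2 = a.2) ->
  exists S3, good S1 S2 S3.
Proof.
case: a => X h; case: b => Y b2 h1 h2 le12 /= aS bS b0; subst b2 => ab nX nY r0S Xs Ys r0h.
have XY : X != Y.
  apply/eqP => e; subst Y; have := ps_eq1 h1 aS bS erefl; move/eqP: ab; by [].
exists (mS3 S1 X Y h); split.
- exact: (ps3 h1 aS bS XY nX nY).
- exact: (le13 Y aS).
- apply: (le32 h1 aS h2 le12 r0S) => //; by rewrite subUset Xs Ys.
- rewrite /pmh (ps_card_Pof (ps3 h1 aS bS XY nX nY)) (ps_card_Pof h1) (Hof3 Y aS).
  rewrite -(card3 h1 aS bS XY).
  move: (#|mS3 S1 X Y h|) (#|Hof S1|) => m n. lia.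
Qed.

Lemma case1 S1 S2 p r0 : PS S1 -> PS S2 -> sps_le S1 S2 -> p \in S1 -> r0 \in S2 ->
  p.1 \subset r0.1 -> p.1 != r0.1 -> exists S3, good S1 S2 S3.
Proof.
move=> h1 h2 le12 pS r0S pr0 pne.
have p1ne := ps_ne h1 pS.
case: (boolP [exists s in S1, (s.2 != set0) && (s.2 \subset r0.1)]) =>
   [/exists_inP[[A H] sS /andP[/= H0 HC]] | nohub].
- have hH : (H, set0) \in S1 := ps_hub h1 sS H0.
  have [[B H'] qS [qs /= q2 _]] := ps_two h1 sS H0; subst H'.
  have AB : A != B by apply/eqP => e; subst B; move/eqP: qs.
  have HnotS2 : (H,set0) \notin S2.
    apply/negP => HS2; have e : (H,set0) = r0 := ps_sub h2 HS2 r0S HC.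
    have pH : p.1 \subset (H,@set0 T).1 by move: pr0; rewrite -e.
    have e' := ps_sub h1 pS hH pH.
    by move/eqP: pne; apply; rewrite e' -e.
  have satC : forall C, (C,H) \in S1 -> C :|: H \subset r0.1.
    move=> C CS; case: (R_sat h1 h2 le12 CS H0) => [[r rS sub] | [HS _]].
    + have rr : r = r0.
        apply: (share_eq h2 rS r0S H0) => //; apply: subset_trans sub; exact: subsetUr.
      by rewrite -rr.
    + by move: HnotS2; rewrite HS.
  exists (cS3 S1 A B H); split.
  + exact: (cps3 h1 hH sS qS AB H0).
  + exact: (cle13 S1 A B H).
  + apply: (cle32 h1 sS qS AB H0 h2 le12 r0S).
    have := satC A sS; have := satC B qS.
    rewrite !subUset => /andP[-> ->] /andP[-> _]; done.
  + exact: (cpmh3 h1 hH sS qS AB H0).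
- have nh : forall s, s \in S1 -> s.2 != set0 -> s.2 \subset r0.1 -> False.
    by move=> s sS s2 sC; move/exists_inP: nohub; apply; exists s; rewrite // s2.
  have [x xr0 xp] : exists2 x, x \in r0.1 & x \notin p.1.
    apply/subsetPn; apply/negP => sub; move/eqP: pne; apply; apply/eqP.
    by rewrite eqEsubset pr0 sub.
  have [z zS xz] := ps_cov h1 x.
  have zC : z.1 \subset r0.1.
    have [r rS zr] := R_ref h1 h2 le12 zS.
    by rewrite -(ps_uniq h2 rS r0S (subsetP zr x xz) xr0).
  have zp : z != p by apply/eqP => e; move: xp; rewrite -e xz.
  have nhub : forall t, t \in S1 -> t.1 \subset r0.1 -> forall s, s \in S1 -> s.2 != t.1.
    move=> t tS tC s sS; apply/eqP => e; apply: (nh s sS); rewrite e //.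
    exact: (ps_ne h1 tS).
  have sat : forall t, t \in S1 -> t.1 \subset r0.1 -> t.2 != set0 -> r0.2 = t.2.
    move=> t tS tC t2; case: (R_sat h1 h2 le12 tS t2) => [[r rS sub] | [_ [r rS [r2 tr]]]].
    + have rr : r = r0.
        apply: (share_eq h2 rS r0S (ps_ne h1 tS)) => //; apply: subset_trans sub; exact: subsetUl.
      case: (nh t tS t2); apply: subset_trans (subsetUr t.1 _) _; by rewrite -rr.
    + by rewrite -(share_eq h2 rS r0S (ps_ne h1 tS) tr tC).
  case: (eqVneq p.2 set0) => [p20|p20].
  + apply: (merge_apply h1 h2 le12 zS pS p20 zp (nhub z zS zC) (nhub p pS pr0) r0S zC pr0).
    exact: sat z zS zC.
  + have z20 : z.2 = set0.
      apply/eqP/negP => /negP z2.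
      have e1 := sat p pS pr0 p20; have e2 := sat z zS zC z2.
      have r02 : r0.2 != set0 by rewrite e1.
      have [r' r'S [r'ne r'2 _]] := ps_two h2 r0S r02.
      have [s sS [s2 ssub]] : exists2 s, s \in S1 & s.2 = r'.2 /\ s.1 \subset r'.1.
        apply: (R_sp2 h1 h2 le12 r'S); first by rewrite r'2.
        by exists p => //; rewrite r'2.
      have [q qS [qp q2 qu]] := ps_two h1 pS p20.
      have sC : s.1 \subset r0.1.
        case: (qu s sS (etrans s2 (etrans r'2 e1))) => ->; first by [].
        case: (qu z zS (etrans (esym e2) e1)) => e; first by move/eqP: zp.
        by rewrite -e.
      by move/eqP: r'ne; apply; apply: (share_eq h2 r'S r0S (ps_ne h1 sS)).
    apply: (merge_apply h1 h2 le12 pS zS z20 (negbT _) (nhub p pS pr0) (nhub z zS zC) r0S pr0 zC).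
    * by apply/negbTE; rewrite eq_sym.
    * exact: sat p pS pr0.
Qed.

Lemma pair_ext (p q : setpair T) : p.1 = q.1 -> p.2 = q.2 -> p = q.
Proof. by case: p q => [a b] [c d] /= -> ->. Qed.

Lemma case2 S1 S2 : PS S1 -> PS S2 -> sps_le S1 S2 ->
  (forall p, p \in S1 -> p.1 \in Pof S2) -> S1 <> S2 -> exists S3, good S1 S2 S3.
Proof.
move=> h1 h2 le12 inP neq.
have blk2 : forall r, r \in S2 -> exists2 p, p \in S1 & p.1 = r.1.
  move=> r rS; have [x xr] := ps_ne' h2 rS; have [p pS xp] := ps_cov h1 x.
  have /imsetP[s sS e] := inP p pS.
  exists p => //; rewrite e; congr fst.
  by apply: (ps_uniq h2 sS rS _ xr); rewrite -e.
have sat2 : forall p r, p \in S1 -> r \in S2 -> p.1 = r.1 -> p.2 != set0 -> p.2 = r.2.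
  move=> p r pS rS e p2; case: (R_sat h1 h2 le12 pS p2) => [[t tS sub] | [_ [t tS [t2 pt]]]].
  - have tr : t = r.
      apply: (share_eq h2 tS rS (ps_ne h1 pS)); last by rewrite e.
      by apply: subset_trans sub; exact: subsetUl.
    have /set0Pn[y yp] := p2.
    have : y \in p.1 by rewrite e -tr; apply: (subsetP sub); rewrite inE yp orbT.
    by move=> yp1; case: (ps_dj h1 pS yp1 yp).
  - have tr : t = r by apply: (share_eq h2 tS rS (ps_ne h1 pS)); rewrite // e.
    by rewrite -tr t2.
case: (boolP [exists r in S2, (r.2 != set0) && (r.2 \notin Hof S1)]) =>
   [/exists_inP[[A H] rS /andP[/= H0 nHof]] | allhub].
- have nH : forall p, p \in S1 -> p.2 != H.
    by move=> p pS; apply/eqP => e; move: nHof; rewrite -e; apply/negP/negPn/HofP; exists p;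
      rewrite // e.
  have [[B H'] qS [qr /= q2 _]] := ps_two h2 rS H0; subst H'.
  have hH2 : (H, set0) \in S2 := ps_hub h2 rS H0.
  have get1 : forall C h, (C,h) \in S2 -> (h = set0 \/ forall p, p \in S1 -> p.2 != h) ->
      (C, set0) \in S1.
    move=> C h CS hyp; have [p pS e] := blk2 _ CS.
    have p20 : p.2 = set0.
      apply/eqP/negP => /negP p2; have e2 := sat2 p _ pS CS e p2.
      case: hyp => [h0|nn]; first by move: p2; rewrite e2 h0 eqxx.
      by move: (nn p pS); rewrite e2 eqxx.
    by move: pS; rewrite (pair_ext (q := (C,set0)) e p20).
  have notsat : forall C h, (C,h) \in S2 -> h != set0 -> forall s, s \in S1 -> s.2 != C.
    move=> C h CS h0 s sS; apply/eqP => e.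
    have C0 : C != set0 := ps_ne h2 CS.
    have s2 : s.2 != set0 by rewrite e.
    case: (R_sat h1 h2 le12 sS s2) => [[t tS sub] | [CS2 _]].
    + have tC : t = (C,h).
        apply: (share_eq h2 tS CS C0) => //; rewrite -e; apply: subset_trans sub; exact: subsetUr.
      have /set0Pn[y ys] := ps_ne h1 sS.
      have yC : y \in C by move: (subsetP sub y); rewrite tC inE ys => /(_ isT).
      by case: (ps_dj h1 sS ys); rewrite e.
    + rewrite e in CS2; have [] := ps_eq1 h2 CS CS2 erefl.
      by move=> hh; move: h0; rewrite hh eqxx.
  have hA : (A,set0) \in S1 by apply: (get1 A H rS); right.
  have hB : (B,set0) \in S1 by apply: (get1 B H qS); right.
  have hH : (H,set0) \in S1 by apply: (get1 H set0 hH2); left.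
  have AB : A != B by apply/eqP => e; subst B; move/eqP: qr.
  have AH : A != H.
    apply/eqP => e; have [y yA] := ps_ne' h2 rS; case: (ps_dj h2 rS yA); by rewrite /= -e.
  have BH : B != H.
    apply/eqP => e; have [y yA] := ps_ne' h2 qS; case: (ps_dj h2 qS yA); by rewrite /= -e.
  have nA := notsat A H rS H0; have nB := notsat B H qS H0.
  exists (nS3 S1 A B H); split.
  + exact: (nps3 h1 hH hA hB AB AH BH nH nA nB).
  + exact: (nle13 A B nH).
  + exact: (nle32 h1 hH AB h2 le12 rS qS).
  + exact: (npmh3 h1 hH hA hB AB AH BH nH nA nB).
- have allH : forall r, r \in S2 -> r.2 != set0 -> r.2 \in Hof S1.
    move=> r rS r2; apply/negPn/negP => nh; move/exists_inP: allhub; apply.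
    by exists r; rewrite // r2.
  have sub12 : S1 \subset S2.
    apply/subsetP => p pS; have /imsetP[s sS e] := inP p pS.
    suff -> : p = s by [].
    apply: pair_ext => //.
    case: (eqVneq p.2 set0) => [p0|p0]; last exact: sat2 p s pS sS e p0.
    rewrite p0; apply/esym/eqP/negP => /negP s2.
    have /HofP[p' p'S [_ e']] := allH s sS s2.
    have [t tS [t2 tsub]] := R_sp2 h1 h2 le12 sS s2 (ex_intro2 _ _ p' p'S (esym e')).
    have tp : t = p by apply: (ps_sub h1 tS pS); rewrite e.
    by move: s2; rewrite -t2 tp p0 eqxx.
  apply: False_ind; apply: neq; apply/eqP; rewrite eqEsubset sub12 /=.
  apply/subsetP => r rS; have [p pS e] := blk2 r rS.
  have pS2 : p \in S2 := subsetP sub12 p pS.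
  by rewrite -(ps_eq1 h2 pS2 rS e).
Qed.

Lemma atomic S1 S2 : PS S1 -> PS S2 -> sps_lt S1 S2 -> exists S3, good S1 S2 S3.
Proof.
move=> h1 h2 [le12 neq].
case: (boolP [forall p in S1, p.1 \in Pof S2]) => [/forall_inP allP | /forall_inPn[p pS npP]].
- exact: case2 h1 h2 le12 allP neq.
- have [r0 r0S pr0] := R_ref h1 h2 le12 pS.
  apply: (case1 h1 h2 le12 pS r0S pr0); apply/eqP => e; move/negP: npP; apply.
  by rewrite e; apply: imset_f.
Qed.

Lemma pmh_ge1 S : (0 < #|T|)%N -> PS S -> (1 <= pmh S)%R.
Proof.
move=> T0 h.
have HP : Hof S \subset Pof S.
  apply/subsetP => g /HofP[p pS [p2 ->]]; apply/imsetP; exists (p.2, set0) => //.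
  exact: (ps_hub h pS p2).
have nothub : forall p, p \in S -> p.2 != set0 -> p.1 \notin Hof S.
  move=> p pS p2; apply/negP => /HofP[s sS [s2 e]].
  have hs := ps_hub h sS s2; rewrite -e in hs.
  by move: p2; rewrite (ps_eq1 h pS hs erefl) eqxx.
have pr : Hof S \proper Pof S.
  apply/properP; split => //.
  have [x _] : exists x : T, x \in [set: T] by apply/set0Pn; rewrite -cards_eq0 cardsT -lt0n.
  have [p pS xp] := ps_cov h x.
  case: (boolP (p.1 \in Hof S)) => [/HofP[s sS [s2 e]] | nh].
  + by exists s.1; [apply: imset_f | exact: nothub].
  + by exists p.1 => //; apply: imset_f.
have := proper_card pr; rewrite /pmh; move: (#|Pof S|) (#|Hof S|) => a b ab. lia.
Qed.

Lemma pmh_le S : PS S -> (pmh S <= #|T|%:Z)%R.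
Proof.
move=> h; have /polestarP[_ part _ _] := h.
have cP : (#|Pof S| <= #|T|)%N.
  rewrite -cardsT (card_partition part) -sum1_card; apply: leq_sum => A AP.
  rewrite card_gt0; apply/negP => /eqP A0; move: part => /and3P[_ _]; by rewrite -A0 AP.
rewrite /pmh; move: (#|Pof S|) (#|Hof S|) cP => a b ab. lia.
Qed.

Lemma strict n S1 S2 : (0 < #|T|)%N -> PS S1 -> PS S2 -> sps_lt S1 S2 ->
  (pmh S1 <= n%:Z)%R -> (pmh S2 < pmh S1)%R.
Proof.
elim: n S1 => [|n IH] S1 T0 h1 h2 lt12 hn.
  by have := pmh_ge1 T0 h1; move: hn; move: (pmh S1) => a; lia.
have [S3 [h3 le13 le32 e3]] := atomic h1 h2 lt12.
case: (eqVneq S3 S2) => [<-|ne32]; first by rewrite e3; move: (pmh S1) => a; lia.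
have := IH S3 T0 h3 h2 (conj le32 (fun e => (negP ne32) (introT eqP e))).
rewrite e3; move: hn; move: (pmh S1) (pmh S2) => a b. lia.
Qed.
End Basics.

Unset Implicit Arguments.
Local Open Scope ring_scope.

Theorem mainTheorem7 (T : finType) (S1 S2 : {set setpair T}) :
  (0 < #|T|)%N -> polestar S1 -> polestar S2 -> sps_lt S1 S2 ->
  [/\ 1 <= pmh S2, pmh S2 < pmh S1, pmh S1 <= #|T|%:Z &
      (2 <= pmh S1 - pmh S2 ->
       exists S3 : {set setpair T},
         [/\ polestar S3, sps_lt S1 S3 & sps_lt S3 S2])].
Proof.
move=> T0 /polestarP h1 /polestarP h2 lt12.
have s12 := strict T0 h1 h2 lt12 (pmh_le h1).
split.
- exact: pmh_ge1 T0 h2.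
- exact: s12.
- exact: pmh_le h1.
- move=> d2; have [S3 [h3 le13 le32 e3]] := atomic h1 h2 lt12.
  exists S3; split.
  + by apply/polestarP.
  + split=> // e; move: e3; rewrite -e; move: (pmh S1) => a; lia.
  + split=> // e; move: d2 e3; rewrite e; move: (pmh S1) (pmh S2) => a b; lia.
Qed.
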